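(* The Lagrange spectrum of $\mathbb{Q}((1/T))$ is $\mathbb{L}=\{1,2,3,\dots\}\cup\{\infty\}$.
   Context: $\mathbb{Q}((1/T))=\{\sum_{i=-\infty}^{m}a_iT^i: m\in\mathbb{Z},\ a_i\in\mathbb{Q}\}$ is the field of formal Laurent series in $1/T$ with rational coefficients. For nonzero $\alpha=\sum_{i\le m}a_iT^i$ with $a_m\neq0$, set $\deg\alpha=m$, and $\deg 0=-\infty$; on $\mathbb{Q}(T)$ this agrees with $\deg(P/Q)=\deg P-\deg Q$. For $\alpha\in\mathbb{Q}((1/T))$ not in $\mathbb{Q}(T)$, the Lagrange constant $l(\alpha)\in\mathbb{Z}\cup\{\infty\}$ is the supremum of the integers $k$ such that $\deg(\alpha-p/q)\le-2\deg q-k$ holds for infinitely many pairs $p,q\in\mathbb{Q}[T]$, $q\ne0$. The Lagrange spectrum is $\mathbb{L}=\{l(\alpha):\alpha\in\mathbb{Q}((1/T))\setminus\mathbb{Q}(T)\}$. *)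

(* Defs.v *)
From mathcomp Require Import all_boot all_order all_algebra.
Set Implicit Arguments. Unset Strict Implicit. Unset Printing Implicit Defensive.
Import Order.TTheory GRing.Theory Num.Theory.
Local Open Scope ring_scope.

(* Formal Laurent series in 1/T over Q: coefficient functions int -> rat
   whose support is bounded above. *)
Definition is_laurent (a : int -> rat) : Prop :=
  exists m : int, forall i : int, m < i -> a i = 0.

Definition deg_le (a : int -> rat) (d : int) : Prop :=
  forall i : int, d < i -> a i = 0.

Definition pdeg (q : {poly rat}) : int := ((size q).-1)%:Z.

Definition polyL (p : {poly rat}) (i : int) : rat :=
  match i with Posz n => p`_n | Negz _ => 0 end.

Definition pmulL (q : {poly rat}) (a : int -> rat) (i : int) : rat :=
  \sum_(j < size q) q`_j * a (i - (j : nat)%:Z).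

Definition irrational (alpha : int -> rat) : Prop :=
  ~ exists p q : {poly rat}, q != 0 /\ forall i, pmulL q alpha i = polyL p i.

(* (p, q) satisfies deg(alpha - p/q) <= -2 deg q - k, where p/q denotes the
   Laurent series beta with q * beta = p. *)
Definition good_approx (alpha : int -> rat) (k : int) (p q : {poly rat}) : Prop :=
  q != 0 /\
  exists beta : int -> rat,
    is_laurent beta /\ (forall i, pmulL q beta i = polyL p i) /\
    deg_le (fun i => alpha i - beta i) (- 2 * pdeg q - k).

(* Pairs are normalized (q monic, gcd(p,q)=1) so that distinct pairs are
   distinct rational functions p/q. *)
Definition approx_set (alpha : int -> rat) (k : int) (p q : {poly rat}) : Prop :=
  [/\ q \is monic, coprimep p q & good_approx alpha k p q].

Definition infinitely_many (alpha : int -> rat) (k : int) : Prop :=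
  ~ exists s : seq ({poly rat} * {poly rat}),
      forall p q, approx_set alpha k p q -> (p, q) \in s.

Inductive ezint := NInf | Fin of int | PInf.

Definition is_sup (S : int -> Prop) (x : ezint) : Prop :=
  match x with
  | NInf => forall k, ~ S k
  | Fin n => (forall k, S k -> k <= n) /\
             (forall m : int, (forall k, S k -> k <= m) -> n <= m)
  | PInf => forall n : int, exists k, S k /\ n <= k
  end.

Definition lagrange_const (alpha : int -> rat) (x : ezint) : Prop :=
  is_sup (infinitely_many alpha) x.

Definition lagrange_spectrum (x : ezint) : Prop :=
  exists alpha : int -> rat, is_laurent alpha /\ irrational alpha /\
    lagrange_const alpha x.

(* Main.v *)
Require Import Defs.
From mathcomp Require Import all_boot all_order all_algebra.
From mathcomp Require Import zify ring lra.
Import Order.TTheory GRing.Theory Num.Theory.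
Set Implicit Arguments. Unset Strict Implicit. Unset Printing Implicit Defensive.
Local Open Scope ring_scope.

Lemma pmulL_wide (q : {poly rat}) a i K : (size q <= K)%N ->
  pmulL q a i = \sum_(j < K) q`_j * a (i - (j : nat)%:Z).
Proof.
move=> hK; rewrite /pmulL (big_ord_widen K (fun j : nat => q`_j * a (i - j%:Z))) //.
rewrite big_mkcond /=; apply: eq_bigr => j _; case: ltnP => // hj.
by rewrite nth_default // mul0r.
Qed.

Lemma pmulLD (q1 q2 : {poly rat}) a i :
  pmulL (q1 + q2) a i = pmulL q1 a i + pmulL q2 a i.
Proof.
set K := maxn (size q1) (size q2).
have h1 : (size q1 <= K)%N by rewrite leq_maxl.
have h2 : (size q2 <= K)%N by rewrite leq_maxr.
have h3 : (size (q1 + q2)%R <= K)%N by apply: leq_trans; [exact: size_polyD | rewrite geq_max h1 h2].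
rewrite (pmulL_wide a i h1) (pmulL_wide a i h2) (pmulL_wide a i h3) -big_split /=.
by apply: eq_bigr => j _; rewrite coefD mulrDl.
Qed.

Lemma pmulLC (c : rat) a i : pmulL c%:P a i = c * a i.
Proof.
have h : (size c%:P <= 1)%N by rewrite size_polyC leq_b1.
by rewrite (pmulL_wide a i h) big_ord1 /= coefC /= subr0.
Qed.

Lemma pmulLX (q : {poly rat}) a i : pmulL (q * 'X) a i = pmulL q a (i - 1).
Proof.
have h : (size (q * 'X)%R <= (size q).+1)%N.
  by apply: leq_trans; [exact: size_polyMleq | rewrite size_polyX addn2].
rewrite (pmulL_wide a i h) big_ord_recl /= coefMX /= mul0r add0r /pmulL.
apply: eq_bigr => j _; rewrite coefMX /=; congr (_ * a _).
rewrite /bump /=; lia.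
Qed.

Lemma pmulL0 a i : pmulL 0 a i = 0.
Proof. by rewrite /pmulL size_poly0 big_ord0. Qed.

Lemma pmulL_sub (q : {poly rat}) a b i :
  pmulL q (fun j => a j - b j) i = pmulL q a i - pmulL q b i.
Proof. by rewrite /pmulL -sumrB; apply: eq_bigr => j _; rewrite mulrBr. Qed.

Lemma pmulL_scale (q : {poly rat}) c a i :
  pmulL q (fun j => c * a j) i = c * pmulL q a i.
Proof. by rewrite /pmulL mulr_sumr; apply: eq_bigr => j _; rewrite mulrCA. Qed.

Lemma pmulL_ext (q : {poly rat}) a b : (forall j, a j = b j) -> forall i, pmulL q a i = pmulL q b i.
Proof. by move=> h i; rewrite /pmulL; apply: eq_bigr => j _; rewrite h. Qed.

Lemma pmulLM (q1 q2 : {poly rat}) a i :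
  pmulL (q1 * q2) a i = pmulL q1 (pmulL q2 a) i.
Proof.
elim/poly_ind: q1 i => [|q c IH] i; first by rewrite mul0r !pmulL0.
rewrite mulrDl pmulLD -mulrA (mulrC 'X) mulrA pmulLX IH.
rewrite pmulLD pmulLX pmulLC; congr (_ + _).
rewrite mul_polyC. rewrite /pmulL.
have -> : size (c *: q2) = if c == 0 then 0%N else size q2.
  by case: eqP => [->|/eqP h]; [rewrite scale0r size_poly0 | rewrite size_scale].
rewrite mulr_sumr; case: eqP => [->|_]; first by rewrite big_ord0 big1 // => j _; rewrite mul0r.
by apply: eq_bigr => j _; rewrite coefZ mulrA.
Qed.

Lemma polyLD (p q : {poly rat}) i : polyL (p + q) i = polyL p i + polyL q i.
Proof. by case: i => [n|n] /=; rewrite ?coefD ?addr0. Qed.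

Lemma polyLN (p : {poly rat}) i : polyL (- p) i = - polyL p i.
Proof. by case: i => [n|n] /=; rewrite ?coefN ?oppr0. Qed.

Lemma polyLB (p q : {poly rat}) i : polyL (p - q) i = polyL p i - polyL q i.
Proof. by rewrite polyLD polyLN. Qed.

Lemma polyLZ c (p : {poly rat}) i : polyL (c *: p) i = c * polyL p i.
Proof. by case: i => [n|n] /=; rewrite ?coefZ ?mulr0. Qed.

Lemma polyLX (p : {poly rat}) i : polyL (p * 'X) i = polyL p (i - 1).
Proof.
case: i => [[|n]|n] /=; rewrite ?coefMX //.
by rewrite subn1.
Qed.

Lemma polyL_neg (p : {poly rat}) i : i < 0 -> polyL p i = 0.
Proof. by case: i. Qed.

Lemma polyL_big (p : {poly rat}) i : (size p)%:Z <= i -> polyL p i = 0.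
Proof. case: i => [n|n] //= h; rewrite nth_default //; lia. Qed.

Lemma polyL0 i : polyL 0 i = 0.
Proof. by case: i => [n|n] //=; rewrite coef0. Qed.

Lemma polyLC c i : polyL c%:P i = if i == 0 then c else 0.
Proof. by case: i => [[|n]|n] //=; rewrite coefC. Qed.

Lemma pmulL_poly (q p : {poly rat}) i : pmulL q (polyL p) i = polyL (q * p) i.
Proof.
elim/poly_ind: q i => [|q c IH] i; first by rewrite pmulL0 mul0r polyL0.
rewrite pmulLD pmulLX pmulLC IH mulrDl polyLD -mulrA (mulrC 'X) mulrA polyLX.
by rewrite mul_polyC polyLZ.
Qed.

Lemma pdegE (q : {poly rat}) : q != 0 -> pdeg q = (size q)%:Z - 1.
Proof. move=> hq; rewrite /pdeg; have := size_poly_gt0 q; rewrite hq; lia. Qed.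

Lemma pmulL_top (q : {poly rat}) v t : q != 0 -> (forall i, t < i -> v i = 0) ->
  pmulL q v (t + pdeg q) = lead_coef q * v t.
Proof.
move=> hq hv; rewrite /pmulL /lead_coef /pdeg.
have hs : size q = (size q).-1.+1 by rewrite prednK // size_poly_gt0.
move: (size q) hs => n ->.
rewrite big_ord_recr /= big1 ?add0r; last first.
  move=> j _; rewrite hv ?mulr0 //; have := ltn_ord j; lia.
by congr (_ * v _); lia.
Qed.

Lemma deg_le_mul (q : {poly rat}) v d : deg_le v d -> deg_le (pmulL q v) (d + pdeg q).
Proof.
move=> hv i hi; rewrite /pmulL big1 // => j _.
rewrite hv ?mulr0 //; have := ltn_ord j; rewrite /pdeg in hi; lia.
Qed.

Lemma deg_le_div (q : {poly rat}) v d : q != 0 -> is_laurent v ->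
  deg_le (pmulL q v) d -> deg_le v (d - pdeg q).
Proof.
move=> hq [m hm] hd.
suff H : forall k : nat, forall i, d - pdeg q < i -> i = m - k%:Z -> v i = 0.
  move=> i hi; case: (lerP i m) => him; last by apply: hm.
  by apply: (H `|m - i|%N) => //; lia.
elim/ltn_ind => k IH i hi hik; subst i.
have htop : forall j, m - k%:Z < j -> v j = 0.
  move=> j hj; case: (lerP j m) => hjm; last by apply: hm.
  apply: (IH `|m - j|%N); lia.
have := pmulL_top hq htop; rewrite hd; last by lia.
move/esym/eqP; rewrite mulf_eq0 lead_coef_eq0 (negbTE hq) /= => /eqP.
done.
Qed.

Section Div.
Variables (p q : {poly rat}).
Let d := (size q).-1.
Let c := lead_coef q.
Let m : int := (size p)%:Z.

Definition newval (k : nat) (f : nat -> rat) : rat :=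
  (polyL p (m - k%:Z) - \sum_(j < d) q`_j * (if (d - j <= k)%N then f (k - (d - j))%N else 0)) / c.

Fixpoint wtab (k : nat) : nat -> rat :=
  match k with
  | 0 => fun _ => newval 0 (fun _ => 0)
  | k'.+1 => fun t => if (t <= k')%N then wtab k' t else newval k'.+1 (wtab k')
  end.

Definition wv (t : nat) := wtab t t.

Lemma wtab_stable k t : (t <= k)%N -> wtab k t = wv t.
Proof.
elim: k => [|k IH] ht; first by move: ht; rewrite leqn0 => /eqP ->.
rewrite /=; case: ifP => [h|h]; first by apply: IH.
have -> : t = k.+1 by move/negbT: h; lia.
by rewrite /wv /= ltnn.
Qed.

Lemma newval_ext k f g : (forall t, (t < k)%N -> f t = g t) -> newval k f = newval k g.
Proof.
move=> h; rewrite /newval; congr ((_ - _) / _); apply: eq_bigr => j _.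
case: ifP => // hj; rewrite h //; have := ltn_ord j; lia.
Qed.

Lemma wv_eq k : wv k = newval k wv.
Proof.
case: k => [|k]; first by apply: newval_ext.
rewrite /wv /= ltnn; apply: newval_ext => t ht; apply: wtab_stable; lia.
Qed.

Definition pdivL (i : int) : rat :=
  if i <= m - d%:Z then wv `|(m - d%:Z - i)%R|%N else 0.

Lemma pdivL_laurent : is_laurent pdivL.
Proof. exists (m - d%:Z)%R => i hi; rewrite /pdivL; case: ifP => //; lia. Qed.

Lemma pdivLP : q != 0 -> forall i, pmulL q pdivL i = polyL p i.
Proof.
move=> hq i.
have hc : c != 0 by rewrite /c lead_coef_eq0.
have hs : size q = d.+1 by rewrite /d prednK // size_poly_gt0.
rewrite /pmulL hs big_ord_recr /=.
have -> : q`_d = c by rewrite /c /lead_coef hs.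
case: (lerP i m) => him; last first.
  rewrite big1 ?add0r; last first.
    move=> j _; rewrite /pdivL ifF ?mulr0 //; have := ltn_ord j; lia.
  rewrite /pdivL ifF ?mulr0 ?polyL_big //; rewrite /m; lia.
set k := `|(m - i)%R|%N.
have -> : pdivL (i - d%:Z) = wv k.
  by rewrite /pdivL ifT; [congr wv; rewrite /k; lia | lia].
rewrite wv_eq /newval.
have -> : m - k%:Z = i by rewrite /k; lia.
have -> : \sum_(j < d) q`_j * pdivL (i - j%:Z) =
  \sum_(j < d) q`_j * (if (d - j <= k)%N then wv (k - (d - j)) else 0).
  apply: eq_bigr => j _; congr (_ * _); rewrite /pdivL.
  have hj := ltn_ord j.
  case: ifP => h1; case: ifP => h2 //.
  - congr wv; rewrite /k; lia.
  - exfalso; move: h2 => /negP; apply; rewrite /k; lia.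
  - exfalso; move: h1 => /negP; apply; move: h2; rewrite /k; lia.
set S := \sum_(j < d) _.
by rewrite mulrC divfK // addrC subrK.
Qed.

End Div.

Lemma sign_sq n : ((-1) ^+ n * (-1) ^+ n : rat) = 1.
Proof. by rewrite -exprMn mulrNN mulr1 expr1n. Qed.

Lemma laurent_sub a b : is_laurent a -> is_laurent b -> is_laurent (fun i => a i - b i).
Proof.
move=> [m1 h1] [m2 h2]; exists (Num.max m1 m2) => i hi.
rewrite h1 ?h2 ?subr0 //; move: hi; rewrite gt_max => /andP[] //.
Qed.

Section CF.
Variable d : nat -> nat.
Hypothesis hd : forall k, (0 < d k)%N.

Fixpoint pq (k : nat) : ({poly rat} * {poly rat}) * ({poly rat} * {poly rat}) :=
  match k with
  | 0 => ((0, 1), (1, 'X^(d 0)))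
  | k'.+1 => let: (a, b) := pq k' in (b, (b.1 * 'X^(d k) + a.1, b.2 * 'X^(d k) + a.2))
  end.

Definition P k := (pq k).1.1.
Definition Q k := (pq k).1.2.

Lemma pq_snd k : (pq k).2 = (P k.+1, Q k.+1).
Proof. by rewrite /P /Q /=; case: (pq k) => a [b1 b2]. Qed.

Lemma pq_S k : pq k.+1 = ((pq k).2, ((pq k).2.1 * 'X^(d k.+1) + (pq k).1.1,
                                      (pq k).2.2 * 'X^(d k.+1) + (pq k).1.2)).
Proof. by rewrite /=; case: (pq k). Qed.

Lemma P_rec k : P k.+2 = P k.+1 * 'X^(d k.+1) + P k.
Proof. by rewrite {1}/P pq_S pq_S pq_snd. Qed.

Lemma Q_rec k : Q k.+2 = Q k.+1 * 'X^(d k.+1) + Q k.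
Proof. by rewrite {1}/Q pq_S pq_S pq_snd. Qed.

Lemma P0 : P 0 = 0. Proof. by []. Qed.
Lemma Q0 : Q 0 = 1. Proof. by []. Qed.
Lemma P1 : P 1 = 1. Proof. by []. Qed.
Lemma Q1 : Q 1 = 'X^(d 0). Proof. by []. Qed.

Definition D k := (\sum_(j < k) d j)%N.

Lemma DS k : D k.+1 = (D k + d k)%N.
Proof. by rewrite /D big_ord_recr. Qed.

Lemma D_ge k : (k <= D k)%N.
Proof. elim: k => [|k IH]; first by []. rewrite DS; have := hd k; lia. Qed.

Lemma D_mono k j : (k <= j)%N -> (D k <= D j)%N.
Proof.
elim: j => [|j IH]; first by rewrite leqn0 => /eqP ->.
rewrite leq_eqVlt => /orP [/eqP -> //|h]; rewrite DS; have := IH h; lia.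
Qed.

Lemma Q_prop k : Q k \is monic /\ size (Q k) = (D k).+1.
Proof.
elim/ltn_ind: k => -[|[|k]] IH.
- by rewrite Q0; split; [exact: monic1 | rewrite size_poly1 /D big_ord0].
- by rewrite Q1; split; [exact: monicXn | rewrite size_polyXn /D big_ord1].
- have [m1 s1] := IH k.+1 (ltnSn _).
  have [m0 s0] := IH k (leqW (ltnSn _)).
  have hs : size (Q k.+1 * 'X^(d k.+1)) = (D k.+2).+1.
    by rewrite size_mulXn ?monic_neq0 // s1 (DS k.+1); lia.
  have hlt : (size (Q k) < size (Q k.+1 * 'X^(d k.+1))%R)%N.
    by rewrite hs s0 (DS k.+1) (DS k); have := hd k.+1; lia.
  rewrite Q_rec size_polyDl // hs; split => //.
  by rewrite monicE lead_coefDl // -monicE monicMr // monicXn.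
Qed.

Lemma Q_neq0 k : Q k != 0.
Proof. by apply: monic_neq0; case: (Q_prop k). Qed.

Lemma pdegQ k : pdeg (Q k) = (D k)%:Z.
Proof. by rewrite /pdeg; case: (Q_prop k) => _ ->. Qed.

Definition eps k : rat := (-1) ^+ k.+1.

Lemma eps_neq0 k : eps k != 0.
Proof. by rewrite /eps signr_eq0. Qed.

Lemma det k : P k * Q k.+1 - P k.+1 * Q k = (eps k)%:P.
Proof.
elim: k => [|k IH].
  by rewrite P0 Q0 P1 Q1 /eps mul0r mulr1 sub0r expr1 polyCN polyC1.
rewrite P_rec Q_rec.
have -> : P k.+1 * (Q k.+1 * 'X^(d k.+1) + Q k) - (P k.+1 * 'X^(d k.+1) + P k) * Q k.+1
   = - (P k * Q k.+1 - P k.+1 * Q k) by ring.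
by rewrite IH /eps [(-1) ^+ k.+2]exprS mulN1r polyCN.
Qed.

Lemma coprimePQ k : coprimep (P k) (Q k).
Proof.
apply/Bezout_eq1_coprimepP; exists ((eps k)%:P * Q k.+1, - (eps k)%:P * P k.+1) => /=.
have -> : (eps k)%:P * Q k.+1 * P k + - (eps k)%:P * P k.+1 * Q k =
   (eps k)%:P * (P k * Q k.+1 - P k.+1 * Q k) by ring.
by rewrite det -polyCM /eps sign_sq.
Qed.

Definition beta k := pdivL (P k) (Q k).

Lemma beta_laurent k : is_laurent (beta k).
Proof. exact: pdivL_laurent. Qed.

Lemma betaP k i : pmulL (Q k) (beta k) i = polyL (P k) i.
Proof. exact: pdivLP (Q_neq0 k) i. Qed.

Definition E k : int := (D k + D k.+1)%N%:Z.

Lemma w_deg k : deg_le (fun i => beta k.+1 i - beta k i) (- E k) /\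
                beta k.+1 (- E k) - beta k (- E k) != 0.
Proof.
set w := fun i => _.
set R := Q k * Q k.+1.
have hR : R != 0 by rewrite mulf_neq0 // Q_neq0.
have hdR : pdeg R = E k.
  rewrite /pdeg /R size_mul ?Q_neq0 //.
  case: (Q_prop k) => _ ->; case: (Q_prop k.+1) => _ ->; rewrite /E; lia.
have hRw : forall i, pmulL R w i = polyL (- eps k)%:P i.
  move=> i; rewrite /w pmulL_sub /R pmulLM (pmulL_ext _ (betaP k.+1)) pmulL_poly.
  rewrite [Q k * Q k.+1]mulrC pmulLM (pmulL_ext _ (betaP k)) pmulL_poly -polyLB polyCN -det.
  by congr polyL; ring.
have hdeg : deg_le w (- E k).
  have := @deg_le_div R w 0 hR.
  rewrite hdR sub0r; apply.
    by apply: laurent_sub; apply: beta_laurent.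
  by move=> i hi; rewrite hRw polyLC; case: eqP => // h; lia.
split => //.
have := pmulL_top hR hdeg; rewrite hdR addNr hRw polyLC eqxx.
move=> h; apply/eqP => h0; move: h; rewrite /w h0 mulr0 => /eqP.
by rewrite oppr_eq0 (negbTE (eps_neq0 k)).
Qed.

Lemma E_ge k : (2 * k + 1)%:Z <= E k.
Proof. rewrite /E; have := D_ge k; have := D_ge k.+1; lia. Qed.

Lemma E_lt k : E k < E k.+1.
Proof. rewrite /E (DS k.+1) (DS k); have := hd k.+1; have := hd k; lia. Qed.

Lemma E_mono k j : (k <= j)%N -> E k <= E j.
Proof. move=> h; rewrite /E; have := D_mono h; have : (k.+1 <= j.+1)%N by []; move/D_mono; lia. Qed.

Lemma beta_stable k j i : (k <= j)%N -> - E k < i -> beta j i = beta k i.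
Proof.
elim: j => [|j IH]; first by rewrite leqn0 => /eqP ->.
rewrite leq_eqVlt => /orP [/eqP -> //|h] hi.
have [h1 _] := w_deg j.
have e : beta j.+1 i - beta j i = 0 by apply: h1; have := @E_mono k j h; lia.
by move/eqP: e; rewrite subr_eq0 => /eqP ->; exact: IH.
Qed.

Definition alpha i := beta `|i|%N i.

Lemma alpha_beta k i : - E k < i -> alpha i = beta k i.
Proof.
move=> hi; rewrite /alpha.
have hK : - E `|i|%N < i by have := E_ge `|i|%N; lia.
rewrite -(beta_stable (leq_maxl `|i|%N k) hK).
by rewrite (beta_stable (leq_maxr `|i|%N k) hi).
Qed.

Lemma alpha_deg k : deg_le (fun i => alpha i - beta k i) (- E k) /\
                    alpha (- E k) - beta k (- E k) != 0.
Proof.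
split; first by move=> i hi; rewrite (alpha_beta hi) subrr.
rewrite (@alpha_beta k.+1); last by have := E_lt k; lia.
by case: (w_deg k).
Qed.

Lemma alpha_laurent : is_laurent alpha.
Proof.
exists 0 => i hi; rewrite (@alpha_beta 0); last by have := E_ge 0; lia.
have <- : pmulL (Q 0) (beta 0) i = beta 0 i by rewrite Q0 -polyC1 pmulLC mul1r.
by rewrite betaP P0 polyL0.
Qed.


Lemma approx_PQ k : approx_set alpha (d k)%:Z (P k) (Q k).
Proof.
split; first by case: (Q_prop k).
  exact: coprimePQ.
split; first exact: Q_neq0.
exists (beta k); split; first exact: beta_laurent.
split; first exact: betaP.
case: (alpha_deg k) => h _ i hi; apply: h; move: hi; rewrite pdegQ /E (DS k); lia.
Qed.

Lemma alpha_irr : irrational alpha.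
Proof.
move=> [p0 [q0 [hq0 hal]]].
set k := size q0.
set v := fun i => pmulL (Q k) (fun j => alpha j - beta k j) i.
have [hdk hnz] := alpha_deg k.
have hv : deg_le v (- E k + D k) by rewrite -pdegQ; apply: deg_le_mul.
have hvt : v (- E k + D k) != 0.
  rewrite /v -pdegQ pmulL_top ?Q_neq0 //.
  by case: (Q_prop k) => /monicP -> _; rewrite mul1r.
have hu := pmulL_top hq0 hv.
have hvE : forall j, v j = pmulL (Q k) alpha j - polyL (P k) j.
  by move=> j; rewrite /v pmulL_sub betaP.
rewrite (pmulL_ext _ hvE) pmulL_sub -pmulLM [q0 * Q k]mulrC pmulLM in hu.
rewrite (pmulL_ext _ hal) !pmulL_poly in hu.
have hneg : - E k + D k + pdeg q0 < 0.
  rewrite /E (DS k) /pdeg; have := D_ge k; have := hd k; rewrite /k; lia.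
rewrite !polyL_neg // in hu.
move/esym/eqP: hu; rewrite subr0 mulf_eq0 lead_coef_eq0 (negbTE hq0) /=.
by rewrite (negbTE hvt).
Qed.

Lemma approx_mono a k k' p q : k' <= k -> approx_set a k p q -> approx_set a k' p q.
Proof.
move=> hk [h1 h2 [h3 [b [hb1 [hb2 hb3]]]]]; split => //; split => //.
exists b; split => //; split => // i hi; apply: hb3; lia.
Qed.

Lemma inf_many K : (forall k0, exists k, (k0 <= k)%N /\ K <= (d k)%:Z) ->
  infinitely_many alpha K.
Proof.
move=> hK [s hs].
set B := (\max_(x <- s) size x.2)%N.
have [k [hk1 hk2]] := hK B.
have hin := hs _ _ (approx_mono hk2 (approx_PQ k)).
have : (size (Q k) <= B)%N.
  by rewrite /B; exact: (@leq_bigmax_seq _ s (fun _ => true) (fun x => size x.2) _ hin).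
case: (Q_prop k) => _ ->; have := D_ge k; rewrite -/B; lia.
Qed.


Lemma v_eq k i : pmulL (Q k) (fun j => alpha j - beta k j) i = pmulL (Q k) alpha i - polyL (P k) i.
Proof. by rewrite pmulL_sub betaP. Qed.

Lemma v_deg k : deg_le (fun i => pmulL (Q k) alpha i - polyL (P k) i) (- Posz (D k.+1)) /\ pmulL (Q k) alpha (- Posz (D k.+1)) - polyL (P k) (- Posz (D k.+1)) != 0.
Proof.
have [hdk hnz] := alpha_deg k.
have he : - Posz (D k.+1) = - E k + pdeg (Q k) by rewrite pdegQ /E; lia.
split.
  move=> i hi; rewrite -v_eq; apply: (deg_le_mul (q:=Q k) hdk); lia.
rewrite he -v_eq pmulL_top ?Q_neq0 //.
by case: (Q_prop k) => /monicP -> _; rewrite mul1r.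
Qed.

End CF.

Section Const.
Variable n : nat.
Hypothesis hn : (0 < n)%N.
Let dn := fun _ : nat => n.
Let hdn : forall k, (0 < dn k)%N. Proof. by []. Qed.

Lemma Dn_eq k : D dn k = (k * n)%N.
Proof. by elim: k => [|k IH]; [rewrite /D big_ord0 | rewrite DS IH mulSn addnC]. Qed.

Lemma decomp (q p : {poly rat}) k i :
  let a := (eps k)%:P * (p * Q dn k.+1 - q * P dn k.+1) in
  let b := (eps k)%:P * (q * P dn k - p * Q dn k) in
  [/\ a * Q dn k + b * Q dn k.+1 = q, a * P dn k + b * P dn k.+1 = p &
  pmulL q (alpha dn) i - polyL p i =
    pmulL a (fun j => pmulL (Q dn k) (alpha dn) j - polyL (P dn k) j) i +
    pmulL b (fun j => pmulL (Q dn k.+1) (alpha dn) j - polyL (P dn k.+1) j) i].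
Proof.
move=> a b.
have ee : (eps k)%:P * (eps k)%:P = 1 :> {poly rat} by rewrite -polyCM /eps sign_sq.
have h1 : a * Q dn k + b * Q dn k.+1 = q.
  have -> : a * Q dn k + b * Q dn k.+1 =
     (eps k)%:P * q * (P dn k * Q dn k.+1 - P dn k.+1 * Q dn k) by rewrite /a /b; ring.
  by rewrite det -mulrA mulrC -mulrA ee mulr1.
have h2 : a * P dn k + b * P dn k.+1 = p.
  have -> : a * P dn k + b * P dn k.+1 =
     (eps k)%:P * p * (P dn k * Q dn k.+1 - P dn k.+1 * Q dn k) by rewrite /a /b; ring.
  by rewrite det -mulrA mulrC -mulrA ee mulr1.
split => //.
rewrite !pmulL_sub -!pmulLM !pmulL_poly.
rewrite -{1}h1 -{1}h2 pmulLD polyLD.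
rewrite opprD !addrA; congr (_ - _); rewrite -!addrA; congr (_ + _); rewrite addrC.
done.
Qed.


Lemma no_approx p q : ~ good_approx (alpha dn) (n.+1)%:Z p q.
Proof.
move=> [hq [bt [hbl [hbp hdeg]]]].
set e := (size q).-1.
have hpe : pdeg q = e%:Z by [].
have hw : deg_le (fun i => pmulL q (alpha dn) i - polyL p i) (- e%:Z - n%:Z - 1).
  move=> i hi; rewrite -hbp -pmulL_sub; apply: (deg_le_mul (q:=q) hdeg); rewrite hpe; lia.
set k := (e %/ n)%N.
have hk1 : (k * n <= e)%N by rewrite /k; lia.
have hk2 : (e < k.+1 * n)%N by rewrite /k; lia.
have [h1 h2 h3] := decomp q p k 0.
move: h1 h2 h3.
set a := (eps k)%:P * _; set b := (eps k)%:P * _ => h1 h2 _.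
have h3 := fun i => (let: And3 _ _ x := decomp q p k i in x).
rewrite -/a -/b in h3.
have [vd0 vt0] := v_deg hdn k.
have [vd1 _] := v_deg hdn k.+1.
rewrite !Dn_eq in vd0 vt0 vd1.
have hsQ : forall j, size (Q dn j) = (j * n).+1.
  by move=> j; case: (Q_prop hdn j) => _ ->; rewrite Dn_eq.
have hQ0 := Q_neq0 hdn.
have hsM : forall x j, x != 0 -> size (x * Q dn j) = (size x + j * n)%N.
  by move=> x j hx; rewrite size_mul // hsQ addnS.
have ha : a != 0.
  apply/eqP => ha0; move: h1; rewrite ha0 mul0r add0r => hbq.
  have hb0 : b != 0 by apply: contraNneq hq => hb0; rewrite -hbq hb0 mul0r.
  move: hk2; rewrite /e -hbq hsM //; have := size_poly_gt0 b; rewrite hb0 => h0 h.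
  move: h0 h; set sb := size b; lia.
have hsa := hsM a k ha.
have hsa0 : (0 < size a)%N by rewrite size_poly_gt0.
set t := pdeg a - (k.+1 * n)%N%:Z.
have hat : pmulL a (fun j => pmulL (Q dn k) (alpha dn) j - polyL (P dn k) j) t != 0.
  rewrite /t; have -> : pdeg a - (k.+1 * n)%N%:Z = - (k.+1 * n)%N%:Z + pdeg a by ring.
  by rewrite pmulL_top // mulf_neq0 // lead_coef_eq0.
have hbt : pmulL b (fun j => pmulL (Q dn k.+1) (alpha dn) j - polyL (P dn k.+1) j) t = 0.
  have [->|hb] := eqVneq b 0; first by rewrite pmulL0.
  have hsb := hsM b k.+1 hb.
  have hle : (size (b * Q dn k.+1)%R <= size (a * Q dn k)%R)%N.
    rewrite leqNgt; apply/negP => hlt; move: hk2.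
    rewrite /e -h1 addrC size_polyDl // hsb.
    have := size_poly_gt0 b; rewrite hb; move=> h0 h; move: h0 h; set sb := size b; lia.
  apply: (deg_le_mul (q:=b) vd1); rewrite /t /pdeg; move: hle; rewrite hsa hsb.
  have := size_poly_gt0 b; rewrite hb => h0; move: h0 hsa0; set sb := size b; set sa := size a.
  lia.
have := hw t; rewrite h3 hbt addr0 => ht.
move: hat; rewrite ht ?eqxx //.
rewrite /t /pdeg; move: hk1 hsa0; set sa := size a; lia.
Qed.

End Const.

Lemma pmulL_laurent (q : {poly rat}) a : is_laurent a -> is_laurent (pmulL q a).
Proof. move=> [m hm]; exists (m + pdeg q); exact: deg_le_mul. Qed.

Lemma polyL_laurent (p : {poly rat}) : is_laurent (polyL p).
Proof. by exists (size p)%:Z => i hi; apply: polyL_big; lia. Qed.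

Lemma dir_step (al : int -> rat) (hal : is_laurent al) (N : nat) :
  exists q p : {poly rat}, [/\ q != 0, (size q <= N.+1)%N &
    deg_le (fun i => pmulL q al i - polyL p i) (- N%:Z - 1)].
Proof.
pose A : 'M[rat]_(N.+1, N) := \matrix_(j, i) al (- (i : nat)%:Z - 1 - (j : nat)%:Z).
set K := kermx A.
have hK : K != 0.
  apply/eqP => hK0; have := mxrank_ker A; rewrite -/K hK0 mxrank0.
  have := rank_leq_col A; lia.
have [r hr] : exists r, row r K != 0.
  case: (pickP (fun r => row r K != 0)) => [r hr | h]; first by exists r.
  case/eqP: hK; apply/row_matrixP => r; rewrite row0; apply/eqP.
  by rewrite -[_ == _]negbK h.
set u := row r K.
have huA : u *m A = 0 by rewrite /u -row_mul mulmx_ker row0.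
pose q : {poly rat} := \poly_(j < N.+1) u 0 (inord j).
have hq : q != 0.
  apply: contraNneq hr => hq0; apply/eqP/rowP => j; rewrite mxE.
  have := congr1 (fun P : {poly rat} => P`_j) hq0.
  by rewrite /= coef_poly ltn_ord inord_val coef0 => h; rewrite [RHS]mxE -h /u [RHS]mxE.
have hsq : (size q <= N.+1)%N by apply: size_poly.
have hker : forall i : nat, (i < N)%N -> pmulL q al (- i%:Z - 1) = 0.
  move=> i hi; rewrite (pmulL_wide al (- i%:Z - 1) hsq).
  transitivity ((u *m A) 0 (Ordinal hi)); last by rewrite huA mxE.
  rewrite mxE; apply: eq_bigr => j _; rewrite coef_poly ltn_ord inord_val /=.
  congr (_ * _); rewrite /A mxE /=; congr al; lia.
have [m hm] := pmulL_laurent q hal.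
pose p : {poly rat} := \poly_(i < `|m|.+1) pmulL q al i%:Z.
exists q, p; split => // i hi.
case: (ltrP i 0) => hi0.
  rewrite polyL_neg // subr0.
  have -> : i = - (`|(i + 1)%R|%N)%:Z - 1 by lia.
  apply: hker; lia.
case: i hi hi0 => [i|i] hi hi0 //=.
rewrite coef_poly; case: ltnP => hi1; first by rewrite subrr.
rewrite hm ?subrr //; lia.
Qed.

Lemma dir_pair (al : int -> rat) (hal : is_laurent al) (N : nat) :
  exists p q, approx_set al 1 p q /\
    deg_le (fun i => pmulL q al i - polyL p i) (- N%:Z - 1).
Proof.
have [q [p [hq hsq hdeg]]] := dir_step hal N.
set g := gcdp p q.
have hg : g != 0 by rewrite /g gcdp_eq0 negb_and hq orbT.
set p1 := p %/ g; set q1 := q %/ g.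
have hp1 : p1 * g = p by rewrite /p1 divpK // dvdp_gcdl.
have hq1e : q1 * g = q by rewrite /q1 divpK // dvdp_gcdr.
have hq1 : q1 != 0 by apply: contraNneq hq => h; rewrite -hq1e h mul0r.
have hcop : coprimep p1 q1 by apply: coprimep_div_gcd; rewrite hq orbT.
set v1 := fun i => pmulL q1 al i - polyL p1 i.
have hv1l : is_laurent v1 by apply: laurent_sub; [apply: pmulL_laurent | apply: polyL_laurent].
have hv1 : forall i, pmulL g v1 i = pmulL q al i - polyL p i.
  move=> i; rewrite /v1 pmulL_sub -pmulLM pmulL_poly.
  by rewrite [g * q1]mulrC hq1e [g * p1]mulrC hp1.
have deg1 : deg_le v1 (- N%:Z - 1 - pdeg g).
  apply: deg_le_div => // i hi; rewrite hv1; exact: hdeg.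
set c := lead_coef q1.
have hc : c != 0 by rewrite lead_coef_eq0.
set ci := c^-1.
have hci : ci != 0 by rewrite invr_eq0.
set q2 := ci%:P * q1; set p2 := ci%:P * p1.
have hq2 : q2 != 0 by rewrite mulf_neq0 // polyC_eq0.
have hmon : q2 \is monic by rewrite monicE lead_coefM lead_coefC mulVf.
have hcop2 : coprimep p2 q2.
  case/Bezout_eq1_coprimepP: hcop => [[u v]] /= huv.
  apply/Bezout_eq1_coprimepP; exists (c%:P * u, c%:P * v) => /=.
  have -> : c%:P * u * p2 + c%:P * v * q2 = (c%:P * ci%:P) * (u * p1 + v * q1)
    by rewrite /p2 /q2; ring.
  by rewrite huv mulr1 -polyCM mulfV.
set v2 := fun i => pmulL q2 al i - polyL p2 i.
have hv2 : forall i, v2 i = ci * v1 i.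
  move=> i; rewrite /v2 /v1 /= /q2 /p2. rewrite (pmulLM ci%:P q1) pmulLC -(pmulL_poly ci%:P p1) pmulLC.
  by rewrite mulrBr.
have deg2 : deg_le v2 (- N%:Z - 1 - pdeg g) by move=> i hi; rewrite hv2 deg1 ?mulr0.
set bt := pdivL p2 q2.
have hbt := pdivLP p2 hq2.
have hab : deg_le (fun i => al i - bt i) (- N%:Z - 1 - pdeg g - pdeg q2).
  apply: deg_le_div => //; first by apply: laurent_sub => //; apply: pdivL_laurent.
  by move=> i hi; rewrite pmulL_sub hbt; apply: deg2.
have hsz : (size q2 <= N.+1)%N.
  rewrite /q2 size_Cmul //; apply: leq_trans hsq; exact: leq_divp.
exists p2, q2; split.
  split => //; split => //; exists bt; split; first exact: pdivL_laurent.
  split => // i hi; apply: hab; rewrite /pdeg in hi *; move: hi hsz.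
  set s2 := size q2; lia.
move=> i hi; apply: deg2; rewrite /pdeg; lia.
Qed.

From Stdlib Require Import Classical.

Lemma dirichlet (al : int -> rat) : is_laurent al -> irrational al -> infinitely_many al 1.
Proof.
move=> hal hirr [s hs].
have hbound : exists M : int, forall p q, (p, q) \in s -> approx_set al 1 p q ->
    exists i, M <= i /\ pmulL q al i - polyL p i != 0.
  elim: s {hs} => [|[p0 q0] s [M IH]].
    by exists 0 => p q; rewrite in_nil.
  have [h0|h0] := classic (approx_set al 1 p0 q0).
    have [i0 hi0] : exists i, pmulL q0 al i - polyL p0 i != 0.
      apply: NNPP => hn; apply: hirr; exists p0, q0.
      case: h0 => hm _ _; split; first exact: monic_neq0.
      move=> i; apply/eqP; rewrite -subr_eq0; apply/negPn/negP => hne.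
      by apply: hn; exists i.
    exists (Num.min M i0) => p q; rewrite in_cons => /orP [/eqP [-> ->] _|hin ha].
      by exists i0; split => //; rewrite ge_min lexx orbT.
    have [i [hi1 hi2]] := IH p q hin ha; exists i; split => //.
    by rewrite ge_min hi1.
  exists M => p q; rewrite in_cons => /orP [/eqP [-> ->] //|hin ha].
  exact: IH.
have [M hM] := hbound.
have [p [q [ha hd]]] := dir_pair hal `|M|%N.
have [i [hi1 hi2]] := hM p q (hs p q ha) ha.
by move: hi2; rewrite hd ?eqxx //; lia.
Qed.

Unset Implicit Arguments.
Theorem corollary1 (x : ezint) :
  lagrange_spectrum x <-> (x = PInf \/ exists n : int, x = Fin n /\ 1 <= n).
Proof.
split.
  move=> [al [hl [hirr hx]]].
  have S1 := dirichlet hl hirr.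
  case: x hx => [hx|n [hx _]|_]; first by case: (hx 1).
  - by right; exists n; split => //; apply: hx.
  - by left.
case=> [->|[n [-> hn]]].
  have hd : forall k, (0 < (fun k : nat => k.+1) k)%N by [].
  exists (alpha (fun k => k.+1)); split; first exact: alpha_laurent hd.
  split; first exact: alpha_irr hd.
  move=> n; exists n; split => //.
  apply: (inf_many hd) => k0; exists (maxn k0 `|n|%N); split; first exact: leq_maxl.
  rewrite /=; have := leq_maxr k0 `|n|%N; lia.
case: n hn => [n|n] hn; last by [].
have hn0 : (0 < n)%N by lia.
have hd : forall k, (0 < (fun _ : nat => n) k)%N by [].
exists (alpha (fun _ => n)); split; first exact: alpha_laurent hd.
split; first exact: alpha_irr hd.
split.
  move=> k hk; rewrite leNgt; apply/negP => hlt; apply: hk; exists [::] => p q ha.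
  have ha' : approx_set (alpha (fun _ => n)) (n.+1)%:Z p q.
    by apply: (approx_mono _ ha); lia.
  by case: ha' => _ _ hg; exfalso; apply: (no_approx hn0 hg).
move=> m hm; apply: hm; apply: (inf_many hd) => k0; exists k0; split => //.
Qed.
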